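(* For both Mixing methods $M$ (under the non-degeneracy assumption) and $M_\theta$ (no assumption), there is a constant $\tau>0$ such that, for their normalizers $y^*=y(V^* )$ and $y=y(V)$, $\|y-y^*\|^2\le\tau(f(V)-f^* )$.
   Context: Let $C\in\mathbb{R}^{n\times n}$ be symmetric with columns $c_i$ and $c_{ii}=0$, $f(V)=\langle C,V^TV\rangle$ over $V\in\mathbb{R}^{k\times n}$ with unit-norm columns ($\|\cdot\|$ the Euclidean norm), $V^*$ a global optimum of the SDP $\min_{X\succeq0}\langle C,X\rangle$ s.t. $X_{ii}=1$, and $f^*$ its optimal value. With $g_i=\sum_{j<i}c_{ij}\hat v_j+\sum_{j>i}c_{ij}v_j$ computed during one cyclic pass, the Mixing method $M$ uses normalizer $y_i=\|g_i\|$ and update $\hat v_i=-g_i/y_i$; the step-size version $M_\theta$, with $\theta\in(0,1/\max_i\|c_i\|_1)$ ($\|\cdot\|_1$ the $1$-norm), uses $y_i=\|v_i-\theta g_i\|$ and $\hat v_i=(v_i-\theta g_i)/y_i$. Non-degeneracy assumption (for $M$): all $\|g_i\|\ge\delta>0$ throughout. *)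

(* Defs.v *)
From mathcomp Require Import all_boot all_order all_algebra.
From mathcomp Require Import reals.
Set Implicit Arguments. Unset Strict Implicit. Unset Printing Implicit Defensive.
Import Order.TTheory GRing.Theory Num.Theory.
Local Open Scope ring_scope.

Section MixingDefs.
Variable R : realType.

Definition enorm (k : nat) (v : 'cV[R]_k) : R := Num.sqrt (\sum_(a < k) v a 0 ^+ 2).

Definition sqdist (n : nat) (y z : 'I_n -> R) : R := \sum_(i < n) (y i - z i) ^+ 2.

Definition frob (n : nat) (C X : 'M[R]_n) : R := \sum_(i < n) \sum_(j < n) C i j * X i j.

Definition fobj (k n : nat) (C : 'M[R]_n) (V : 'M[R]_(k, n)) : R := frob C (V^T *m V).

Definition unit_cols (k n : nat) (V : 'M[R]_(k, n)) : Prop :=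
  forall i : 'I_n, enorm (col i V) = 1.

Definition psd (n : nat) (X : 'M[R]_n) : Prop :=
  X^T = X /\ forall u : 'cV[R]_n, 0 <= (u^T *m X *m u) 0 0.

Definition sdp_opt (k n : nat) (C : 'M[R]_n) (Vs : 'M[R]_(k, n)) : Prop :=
  unit_cols Vs /\
  forall X : 'M[R]_n, psd X -> (forall i, X i i = 1) -> fobj C Vs <= frob C X.

(* g_i computed from the current (partially updated) matrix W:
   columns j < i already updated (hat v_j), columns j > i original *)
Definition gvec (k n : nat) (C : 'M[R]_n) (W : 'M[R]_(k, n)) (i : 'I_n) : 'cV[R]_k :=
  \sum_(j < n | j != i) C i j *: col j W.

(* An update rule: given v_i and g_i, returns the un-normalized vector u_i;
   the normalizer is y_i = ||u_i|| and hat v_i = u_i / y_i. *)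
Definition rule_M (k : nat) (v g : 'cV[R]_k) : 'cV[R]_k := - g.
Definition rule_Mtheta (theta : R) (k : nat) (v g : 'cV[R]_k) : 'cV[R]_k := v - theta *: g.

Definition step (k n : nat) (rule : 'cV[R]_k -> 'cV[R]_k -> 'cV[R]_k)
  (C : 'M[R]_n) (W : 'M[R]_(k, n)) (i : 'I_n) : 'M[R]_(k, n) :=
  let u := rule (col i W) (gvec C W i) in
  \matrix_(a < k, j < n) (if j == i then (enorm u)^-1 * u a 0 else W a j).

Definition state (k n : nat) (rule : 'cV[R]_k -> 'cV[R]_k -> 'cV[R]_k)
  (C : 'M[R]_n) (V : 'M[R]_(k, n)) (i : 'I_n) : 'M[R]_(k, n) :=
  foldl (step rule C) V (take i (enum 'I_n)).

Definition gpass (k n : nat) (rule : 'cV[R]_k -> 'cV[R]_k -> 'cV[R]_k)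
  (C : 'M[R]_n) (V : 'M[R]_(k, n)) (i : 'I_n) : 'cV[R]_k :=
  gvec C (state rule C V i) i.

Definition ynorm (k n : nat) (rule : 'cV[R]_k -> 'cV[R]_k -> 'cV[R]_k)
  (C : 'M[R]_n) (V : 'M[R]_(k, n)) (i : 'I_n) : R :=
  let W := state rule C V i in enorm (rule (col i W) (gvec C W i)).

Definition nondeg (k n : nat) (C : 'M[R]_n) (V : 'M[R]_(k, n)) (delta : R) : Prop :=
  forall i, delta <= enorm (gpass (@rule_M k) C V i).

Definition maxcol1 (n : nat) (C : 'M[R]_n) : R :=
  \big[Num.max/0]_(i < n) \sum_(j < n) `|C j i|.

End MixingDefs.

(* Main.v *)
Require Import Defs.
From mathcomp Require Import all_boot all_order all_algebra.
From mathcomp Require Import reals ring lra.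
Set Implicit Arguments. Unset Strict Implicit. Unset Printing Implicit Defensive.
Import Order.TTheory GRing.Theory Num.Theory.
Local Open Scope ring_scope.

Lemma quad_cs {R : realType} (a b c : R) : 0 <= c ->
  (forall s : R, 0 <= a + 2 * s * b + s ^+ 2 * c) -> b ^+ 2 <= a * c.
Proof.
move=> c0 H.
have a0 : 0 <= a by have := H 0; rewrite !(mul0r, mulr0, addr0, expr0n).
have [c00|cn0] := eqVneq c 0.
  rewrite c00 mulr0; move: H; rewrite c00 => H.
  have [->|bn0] := eqVneq b 0; first by rewrite expr0n.
  have := H (- (a + 1) / (2 * b)).
  have -> : 2 * (- (a + 1) / (2 * b)) * b = - (a + 1) by field.
  rewrite mulr0 addr0; lra.
have cp : 0 < c by rewrite lt_def cn0 c0.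
have := H (- b / c).
have -> : a + 2 * (- b / c) * b + (- b / c) ^+ 2 * c = (a * c - b ^+ 2) / c by field.
rewrite pmulr_lge0 ?invr_gt0 //; lra.
Qed.

Definition qf {R : realType} (m : nat) (S : 'M[R]_m) (x y : 'cV[R]_m) : R :=
  (x^T *m S *m y) 0 0.

Lemma qfDl {R : realType} m (S : 'M[R]_m) x1 x2 y :
  qf S (x1 + x2) y = qf S x1 y + qf S x2 y.
Proof. by rewrite /qf linearD /= !mulmxDl mxE. Qed.
Lemma qfDr {R : realType} m (S : 'M[R]_m) x y1 y2 :
  qf S x (y1 + y2) = qf S x y1 + qf S x y2.
Proof. by rewrite /qf !mulmxDr mxE. Qed.
Lemma qfZl {R : realType} m (S : 'M[R]_m) (s : R) x y :
  qf S (s *: x) y = s * qf S x y.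
Proof. by rewrite /qf linearZ /= -!scalemxAl mxE. Qed.
Lemma qfZr {R : realType} m (S : 'M[R]_m) (s : R) x y :
  qf S x (s *: y) = s * qf S x y.
Proof. by rewrite /qf -!scalemxAr mxE. Qed.
Lemma qf_sym {R : realType} m (S : 'M[R]_m) x y : S^T = S ->
  qf S x y = qf S y x.
Proof.
move=> sS; have tr1 (M : 'M[R]_1) : M 0 0 = M^T 0 0 by rewrite mxE.
by rewrite /qf tr1 !trmx_mul trmxK sS mulmxA.
Qed.

Lemma qf_cs {R : realType} m (S : 'M[R]_m) x y : S^T = S ->
  (forall z, 0 <= qf S z z) -> qf S x y ^+ 2 <= qf S x x * qf S y y.
Proof.
move=> sS psd; apply: quad_cs => // s.
have := psd (x + s *: y).
rewrite qfDl !qfDr !qfZl !qfZr (qf_sym x y sS).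
move=> h; apply: (le_trans h); rewrite le_eqVlt; apply/orP; left; apply/eqP; ring.
Qed.

Lemma qfE {R : realType} m (S : 'M[R]_m) x y :
  qf S x y = \sum_i \sum_j x i 0 * S i j * y j 0.
Proof.
rewrite /qf mxE; under eq_bigr => j _ do rewrite mxE big_distrl /=.
rewrite exchange_big /=; apply: eq_bigr => i _; apply: eq_bigr => j _.
by rewrite mxE.
Qed.

Lemma sum_delta_l {R : realType} m (i : 'I_m) (F : 'I_m -> R) :
  \sum_j (i == j)%:R * F j = F i.
Proof.
rewrite (bigD1 i) //= eqxx mul1r big1 ?addr0 // => j.
by rewrite eq_sym => /negbTE ->; rewrite mul0r.
Qed.

Lemma enorm1_sum {R : realType} k (v : 'cV[R]_k) :
  enorm v = 1 -> \sum_a v a 0 ^+ 2 = 1.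
Proof.
rewrite /enorm => h; rewrite -(@sqr_sqrtr _ (\sum_a v a 0 ^+ 2)) ?h ?expr1n //.
by apply: sumr_ge0 => a _; apply: sqr_ge0.
Qed.

Lemma ge0_sqsum {R : realType} k (w : 'cV[R]_k) : 0 <= (w^T *m w) 0 0.
Proof.
rewrite mxE; apply: sumr_ge0 => a _; rewrite mxE -expr2; apply: sqr_ge0.
Qed.

Definition Gm {R : realType} k n (Vs : 'M[R]_(k, n)) := Vs^T *m Vs.
Definition lam {R : realType} k n (C : 'M[R]_n) (Vs : 'M[R]_(k, n)) (i : 'I_n) : R :=
  - \sum_j C i j * Gm Vs i j.
Definition Smat {R : realType} k n (C : 'M[R]_n) (Vs : 'M[R]_(k, n)) : 'M[R]_n :=
  \matrix_(i, j) (C i j + (i == j)%:R * lam C Vs i).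

Lemma GmE {R : realType} k n (Vs : 'M[R]_(k, n)) i j :
  Gm Vs i j = \sum_a Vs a i * Vs a j.
Proof. by rewrite /Gm mxE; apply: eq_bigr => a _; rewrite mxE. Qed.

Lemma Gm_sym {R : realType} k n (Vs : 'M[R]_(k, n)) i j : Gm Vs i j = Gm Vs j i.
Proof. by rewrite !GmE; apply: eq_bigr => a _; rewrite mulrC. Qed.

Lemma Csym {R : realType} n (C : 'M[R]_n) i j : C^T = C -> C i j = C j i.
Proof. by move=> sC; rewrite -[in LHS]sC mxE. Qed.

Lemma Smat_sym {R : realType} k n (C : 'M[R]_n) (Vs : 'M[R]_(k, n)) :
  C^T = C -> (Smat C Vs)^T = Smat C Vs.
Proof.
move=> sC; apply/matrixP => i j; rewrite !mxE (Csym _ _ sC).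
by case: (eqVneq i j) => [->|h] //; rewrite !mul0r.
Qed.

Lemma qfSE {R : realType} k n (C : 'M[R]_n) (Vs : 'M[R]_(k, n)) u :
  qf (Smat C Vs) u u = \sum_i \sum_j C i j * u i 0 * u j 0
                        + \sum_i lam C Vs i * u i 0 ^+ 2.
Proof.
rewrite qfE -big_split /=; apply: eq_bigr => i _.
under eq_bigr => j _ do rewrite mxE mulrDr mulrDl.
rewrite big_split /=; congr (_ + _); first by apply: eq_bigr => j _; ring.
under eq_bigr => j _ do rewrite (mulrC (u i 0)) -!mulrA.
by rewrite sum_delta_l; ring.
Qed.

Lemma Gm_diag {R : realType} k n (Vs : 'M[R]_(k, n)) i :
  unit_cols Vs -> Gm Vs i i = 1.
Proof.
move=> uc; rewrite GmE -(enorm1_sum (uc i)); apply: eq_bigr => a _.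
by rewrite mxE expr2.
Qed.

Lemma fobjE {R : realType} k n (C : 'M[R]_n) (V : 'M[R]_(k, n)) :
  fobj C V = \sum_i \sum_j C i j * Gm V i j.
Proof. by []. Qed.

Lemma fstar_lam {R : realType} k n (C : 'M[R]_n) (Vs : 'M[R]_(k, n)) :
  fobj C Vs = - \sum_i lam C Vs i.
Proof. by rewrite fobjE /lam sumrN opprK. Qed.

Lemma two_qf {R : realType} k n (C : 'M[R]_n) (Vs : 'M[R]_(k, n)) u :
  C^T = C ->
  2 * qf (Smat C Vs) u u = \sum_i \sum_j (C i j * (2 * u i 0 * u j 0
      - (u i 0 ^+ 2 + u j 0 ^+ 2) * Gm Vs i j)).
Proof.
move=> sC.
have -> : \sum_i \sum_j (C i j * (2 * u i 0 * u j 0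
      - (u i 0 ^+ 2 + u j 0 ^+ 2) * Gm Vs i j)) =
   \sum_i \sum_j (2 * (C i j * u i 0 * u j 0) - u i 0 ^+ 2 * (C i j * Gm Vs i j)
      - u j 0 ^+ 2 * (C i j * Gm Vs i j)).
  by apply: eq_bigr => i _; apply: eq_bigr => j _; ring.
under eq_bigr => i _ do rewrite !sumrB -!mulr_sumr.
rewrite !sumrB -!mulr_sumr.
have -> : \sum_i \sum_j u j 0 ^+ 2 * (C i j * Gm Vs i j) =
          \sum_j u j 0 ^+ 2 * \sum_i C j i * Gm Vs j i.
  rewrite exchange_big /=; apply: eq_bigr => j _; rewrite mulr_sumr.
  by apply: eq_bigr => i _; rewrite (Csym _ _ sC) Gm_sym.
rewrite qfSE /lam.
have -> : \sum_i - (\sum_j C i j * Gm Vs i j) * u i 0 ^+ 2 =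
   - \sum_i u i 0 ^+2 * \sum_j C i j * Gm Vs i j.
  by rewrite -sumrN; apply: eq_bigr => i _; ring.
ring.
Qed.

Lemma h_facts {R : realType} (x : R) : 0 <= x ->
  0 < (1 + x)^-1 /\ (1 + x)^-1 <= 1 /\ 1 - (1 + x)^-1 <= x /\ (1 + x)^-1 * (1 + x) = 1.
Proof.
move=> x0; have p : 0 < 1 + x by lra.
have e : (1 + x)^-1 * (1 + x) = 1 by rewrite mulVf // gt_eqF.
have hp : 0 < (1 + x)^-1 by rewrite invr_gt0.
have h1 : (1 + x)^-1 <= 1 by rewrite invr_le1 // ?unitf_gt0 //; lra.
by split=> //; split=> //; split=> //; nra.
Qed.

Lemma final_real {R : realType} (Q r K A : R) : 0 <= A -> A - r * K <= Q ->
  r * (2 * (K + 1)) = - Q -> 0 <= r * K -> 0 < r -> Q < 0 -> False.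
Proof. move=> *; lra. Qed.

Lemma S_psd {R : realType} k n (C : 'M[R]_n) (Vs : 'M[R]_(k, n)) :
  C^T = C -> sdp_opt C Vs -> forall u, 0 <= qf (Smat C Vs) u u.
Proof.
move=> sC [uc opt] u.
pose w i := u i 0 ^+ 2.
pose G := Gm Vs.
pose a i j := C i j * (2 * u i 0 * u j 0 - (w i + w j) * G i j).
have w0 i : 0 <= w i by apply: sqr_ge0.
pose h (t : R) i := (1 + t ^+ 2 * w i)^-1.
pose K := \sum_i \sum_j `|a i j| * (w i + w j).
have K0 : 0 <= K.
  apply: sumr_ge0 => i _; apply: sumr_ge0 => j _.
  by apply: mulr_ge0 => //; apply: addr_ge0.
have claim2 : forall t, 0 < t -> 0 <= \sum_i \sum_j h t i * h t j * a i j.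
  move=> t t0; pose r := t ^+ 2.
  have xi i : 0 <= r * w i by apply: mulr_ge0 => //; apply: sqr_ge0.
  have hn0 i : 1 + r * w i != 0 by apply: lt0r_neq0; have := xi i; lra.
  pose e := \row_i ((1 - r * w i) * h t i).
  pose phi := \col_i (2 * t * u i 0 * h t i).
  pose Y := Vs *m diag_mx e.
  pose X := Y^T *m Y + phi *m phi^T.
  have XE i j : X i j = e 0 i * e 0 j * G i j + phi i 0 * phi j 0.
    rewrite !mxE big_ord1 !mxE big_distrr /=; congr (_ + _).
    by apply: eq_bigr => b _; rewrite /Y mul_mx_diag !mxE; ring.
  have psdX : psd X.
    split; first by rewrite /X linearD /= !trmx_mul !trmxK.
    move=> z; rewrite /X mulmxDr mulmxDl mxE; apply: addr_ge0.
      have -> : z^T *m (Y^T *m Y) *m z = (Y *m z)^T *m (Y *m z).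
        by rewrite [(Y *m z)^T]trmx_mul !mulmxA.
      exact: ge0_sqsum.
    have -> : z^T *m (phi *m phi^T) *m z = (phi^T *m z)^T *m (phi^T *m z).
      by rewrite [(phi^T *m z)^T]trmx_mul trmxK !mulmxA.
    exact: ge0_sqsum.
  have diagX i : X i i = 1.
    rewrite XE /G Gm_diag // !mxE.
    have := hn0 i; rewrite /h /r /w /= => hh; field; by rewrite exprMn.
  have := opt X psdX diagX.
  have -> : frob C X = fobj C Vs + 2 * r * \sum_i \sum_j h t i * h t j * a i j.
    rewrite /frob fobjE mulr_sumr -big_split /=; apply: eq_bigr => i _.
    rewrite mulr_sumr -big_split /=; apply: eq_bigr => j _.
    rewrite XE [e 0 i]mxE [e 0 j]mxE [phi i 0]mxE [phi j 0]mxE /a /h /r /w /=.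
    have := hn0 i; have := hn0 j; rewrite /r /w /= => hj hi.
    by field; rewrite !exprMn hi hj.
  rewrite lerDl => H.
  have r0 : 0 < 2 * r by rewrite mulr_gt0 // exprn_gt0.
  by rewrite -(pmulr_rge0 _ r0).
have claim3 : forall t, 0 < t ->
    \sum_i \sum_j h t i * h t j * a i j - t ^+ 2 * K <= \sum_i \sum_j a i j.
  move=> t t0; rewrite /K mulr_sumr -sumrB; apply: ler_sum => i _.
  rewrite mulr_sumr -sumrB; apply: ler_sum => j _.
  have xi l : 0 <= t ^+ 2 * w l by apply: mulr_ge0 => //; apply: sqr_ge0.
  have [hi0 [hi1 [hi2 _]]] := h_facts (xi i).
  have [hj0 [hj1 [hj2 _]]] := h_facts (xi j).
  rewrite -/(h t i) -/(h t j) in hi0 hi1 hi2 hj0 hj1 hj2.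
  have D0 : 0 <= 1 - h t i * h t j by nra.
  have D1 : 1 - h t i * h t j <= t ^+ 2 * w i + t ^+ 2 * w j by nra.
  have A1 : a i j <= `|a i j| by apply: ler_norm.
  have A2 : - a i j <= `|a i j| by rewrite -normrN; apply: ler_norm.
  have A3 : 0 <= `|a i j| by [].
  nra.
rewrite -(@pmulr_rge0 _ 2) // two_qf //.
rewrite -/G.
set Q := \sum_i \sum_j _.
have -> : Q = \sum_i \sum_j a i j by [].
rewrite leNgt; apply/negP => Qn.
set Q' := \sum_i \sum_j a i j in Qn.
pose r := - Q' / (2 * (K + 1)).
have r0 : 0 < r by rewrite /r divr_gt0 //; lra.
have t0 : 0 < Num.sqrt r by rewrite sqrtr_gt0.
have := claim3 _ t0; have := claim2 _ t0.
rewrite sqr_sqrtr; last exact: ltW.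
move=> c2 c3.
have er : r * (2 * (K + 1)) = - Q' by rewrite /r mulfVK // gt_eqF //; lra.
have rK : 0 <= r * K by apply: mulr_ge0 => //; apply: ltW.
exact: (final_real c2 c3 er rK r0 Qn).
Qed.

Lemma sq_le_sum {R : realType} m (z : 'cV[R]_m) i :
  z i 0 ^+ 2 <= \sum_a z a 0 ^+ 2.
Proof.
rewrite (bigD1 i) //= lerDl; apply: sumr_ge0 => a _; apply: sqr_ge0.
Qed.

Lemma qf1E {R : realType} m (z y : 'cV[R]_m) :
  qf 1%:M z y = \sum_a z a 0 * y a 0.
Proof. by rewrite /qf mulmx1 mxE; apply: eq_bigr => a _; rewrite mxE. Qed.

Lemma Sx_bound {R : realType} m (S : 'M[R]_m) x : S^T = S ->
  (forall z, 0 <= qf S z z) ->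
  qf 1%:M (S *m x) (S *m x) <= (\sum_i \sum_j `|S i j|) * qf S x x.
Proof.
move=> sS psd; set z := S *m x; set L := \sum_i \sum_j _.
have e1 : qf 1%:M z z = qf S z x by rewrite /qf mulmx1 /z mulmxA.
have cs := qf_cs z x sS psd.
set N := qf 1%:M z z.
have N0 : 0 <= N by rewrite /N qf1E; apply: sumr_ge0 => a _; rewrite -expr2 sqr_ge0.
have Q0 : 0 <= qf S x x by apply: psd.
have L0 : 0 <= L by apply: sumr_ge0 => i _; apply: sumr_ge0 => j _.
have b1 : qf S z z <= L * N.
  rewrite qfE /L mulr_suml; apply: ler_sum => i _; rewrite mulr_suml.
  apply: ler_sum => j _.
  have hi := sq_le_sum z i; have hj := sq_le_sum z j.
  rewrite /N qf1E.
  under [X in _ <= _ * X]eq_bigr => a _ do rewrite -expr2.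
  set NN := \sum_a _ in hi hj *.
  have hs : z i 0 * S i j * z j 0 <= `|S i j| * `|z i 0 * z j 0|.
    rewrite -normrM; have -> : z i 0 * S i j * z j 0 = S i j * (z i 0 * z j 0) by ring.
    exact: ler_norm.
  apply: (le_trans hs); apply: ler_wpM2l => //.
  have : `|z i 0 * z j 0| * 2 <= z i 0 ^+ 2 + z j 0 ^+ 2.
    rewrite normrM; have := sqr_ge0 (`|z i 0| - `|z j 0|).
    rewrite -[z i 0 ^+ 2]real_normK ?num_real // -[z j 0 ^+ 2]real_normK ?num_real //.
    move=> h; nra.
  have := sqr_ge0 (z i 0); have := sqr_ge0 (z j 0); lra.
have : N ^+ 2 <= L * N * qf S x x.
  rewrite {1}/N e1; apply: (le_trans cs).
  by apply: ler_wpM2r.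
move=> h; have [->|Np] := eqVneq N 0; first by apply: mulr_ge0.
have Npos : 0 < N by rewrite lt_def Np N0.
nra.
Qed.

Lemma gap_eq {R : realType} k n (C : 'M[R]_n) (Vs V : 'M[R]_(k, n)) :
  unit_cols V ->
  fobj C V - fobj C Vs = \sum_a qf (Smat C Vs) (row a V)^T (row a V)^T.
Proof.
move=> uc; rewrite [fobj C Vs]fstar_lam opprK.
under [RHS]eq_bigr => a _ do rewrite qfSE.
rewrite big_split /=; congr (_ + _).
  rewrite fobjE [RHS]exchange_big /=; apply: eq_bigr => i _.
  rewrite [RHS]exchange_big /=; apply: eq_bigr => j _.
  rewrite GmE mulr_sumr; apply: eq_bigr => a _; rewrite !mxE; ring.
rewrite [RHS]exchange_big /=; apply: eq_bigr => i _.
rewrite -mulr_sumr -[LHS]mulr1; congr (_ * _).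
by rewrite -(enorm1_sum (uc i)); apply: eq_bigr => a _; rewrite !mxE.
Qed.

Lemma Smat_symE {R : realType} k n (C : 'M[R]_n) (Vs : 'M[R]_(k, n)) i j :
  C^T = C -> Smat C Vs i j = Smat C Vs j i.
Proof. by move=> sC; rewrite -[in LHS](Smat_sym Vs sC) mxE. Qed.

Definition Lc {R : realType} k n (C : 'M[R]_n) (Vs : 'M[R]_(k, n)) : R :=
  \sum_i \sum_j `|Smat C Vs i j|.

Lemma E2_bound {R : realType} k n (C : 'M[R]_n) (Vs V : 'M[R]_(k, n)) :
  C^T = C -> sdp_opt C Vs -> unit_cols V ->
  \sum_i \sum_a (V *m Smat C Vs) a i ^+ 2 <= Lc C Vs * (fobj C V - fobj C Vs)
  /\ 0 <= fobj C V - fobj C Vs.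
Proof.
move=> sC opt uc; have psd := S_psd sC opt.
rewrite gap_eq //; split; last by apply: sumr_ge0 => a _; apply: psd.
rewrite mulr_sumr exchange_big /=; apply: ler_sum => a _.
apply: le_trans (Sx_bound _ (Smat_sym Vs sC) psd).
rewrite qf1E le_eqVlt; apply/orP; left; apply/eqP; apply: eq_bigr => i _.
rewrite -expr2 !mxE; congr (_ ^+ 2); apply: eq_bigr => j _.
by rewrite (@Smat_symE R k n C Vs j i sC) !mxE mulrC.
Qed.

Lemma sq_inj_ge0 {R : realType} (x y : R) : 0 <= x -> 0 <= y -> x ^+ 2 = y ^+ 2 -> x = y.
Proof. move=> x0 y0 h; apply/eqP; rewrite eq_le; apply/andP; split; nra. Qed.

Lemma sq_le_ge0 {R : realType} (x y : R) : 0 <= y -> x ^+ 2 <= y ^+ 2 -> x <= y.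
Proof. move=> y0 h; nra. Qed.

Lemma enorm_ge0 {R : realType} k (v : 'cV[R]_k) : 0 <= enorm v.
Proof. exact: sqrtr_ge0. Qed.

Lemma enorm_sq {R : realType} k (v : 'cV[R]_k) : enorm v ^+ 2 = qf 1%:M v v.
Proof.
rewrite /enorm sqr_sqrtr ?qf1E; last by apply: sumr_ge0 => a _; apply: sqr_ge0.
by apply: eq_bigr => a _; rewrite expr2.
Qed.

Lemma qf1_psd {R : realType} k (z : 'cV[R]_k) : 0 <= qf 1%:M z z.
Proof. by rewrite -enorm_sq sqr_ge0. Qed.

Lemma enorm_cs {R : realType} k (u v : 'cV[R]_k) : qf 1%:M u v <= enorm u * enorm v.
Proof.
have := qf_cs u v (trmx1 _ _) (@qf1_psd R k); rewrite -!enorm_sq -exprMn => h.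
apply: le_trans (ler_norm _) _; apply: sq_le_ge0.
  by apply: mulr_ge0; apply: enorm_ge0.
by rewrite real_normK ?num_real.
Qed.

Lemma enormD {R : realType} k (u v : 'cV[R]_k) : enorm (u + v) <= enorm u + enorm v.
Proof.
apply: sq_le_ge0; first by apply: addr_ge0; apply: enorm_ge0.
rewrite enorm_sq qfDl !qfDr (qf_sym v u (trmx1 _ _)) -!enorm_sq.
have := enorm_cs u v; lra.
Qed.

Lemma enormZ {R : realType} k (s : R) (v : 'cV[R]_k) : enorm (s *: v) = `|s| * enorm v.
Proof.
apply: sq_inj_ge0; [exact: enorm_ge0 | by apply: mulr_ge0; [|apply: enorm_ge0] |].
rewrite exprMn real_normK ?num_real // !enorm_sq qfZl qfZr; ring.
Qed.

Lemma enormN {R : realType} k (v : 'cV[R]_k) : enorm (- v) = enorm v.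
Proof. by rewrite -scaleN1r enormZ normrN1 mul1r. Qed.

Lemma enormB_rev {R : realType} k (u v : 'cV[R]_k) : `|enorm u - enorm v| <= enorm (u - v).
Proof.
have h1 := enormD (u - v) v; rewrite subrK in h1.
have h2 := enormD (v - u) u; rewrite subrK in h2.
rewrite -opprB enormN in h2.
rewrite ler_norml; apply/andP; split; lra.
Qed.

Lemma enorm_sum {R : realType} k (I : finType) (P : pred I) (F : I -> 'cV[R]_k) :
  enorm (\sum_(i | P i) F i) <= \sum_(i | P i) enorm (F i).
Proof.
apply: (big_ind2 (fun x y => enorm x <= y)).
- by rewrite /enorm big1 ?sqrtr0 // => a _; rewrite mxE expr0n.
- by move=> x1 x2 y1 y2 h1 h2; apply: le_trans (enormD _ _) _; apply: lerD.
- by [].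
Qed.

Lemma enorm0 {R : realType} k : enorm (0 : 'cV[R]_k) = 0.
Proof. by rewrite -(scale0r 0) enormZ normr0 mul0r. Qed.

Lemma normalize_bound {R : realType} k (u v : 'cV[R]_k) (a : R) :
  enorm v = 1 -> 0 <= a -> 0 < enorm u ->
  enorm ((enorm u)^-1 *: u - v) <= 2 * enorm (u - a *: v) / enorm u.
Proof.
move=> v1 a0 up; set N := enorm u.
have -> : N^-1 *: u - v = N^-1 *: ((u - a *: v) + (a - N) *: v).
  apply/colP => b; rewrite !mxE; field; exact: lt0r_neq0.
have Ni : 0 < N^-1 by rewrite invr_gt0.
rewrite enormZ ger0_norm; last exact: ltW.
rewrite mulrC ler_pM2r //.
apply: le_trans (enormD _ _) _; rewrite enormZ v1 mulr1.
have : `|a - N| <= enorm (u - a *: v).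
  have := enormB_rev (a *: v) u; rewrite enormZ (ger0_norm a0) v1 mulr1 -/N.
  by rewrite -[u - a *: v]opprB enormN.
lra.
Qed.

Definition stN {R : realType} k n (rule : 'cV[R]_k -> 'cV[R]_k -> 'cV[R]_k)
  (C : 'M[R]_n) (V : 'M[R]_(k, n)) (m : nat) : 'M[R]_(k, n) :=
  foldl (step rule C) V (take m (enum 'I_n)).

Definition ucol {R : realType} k n (rule : 'cV[R]_k -> 'cV[R]_k -> 'cV[R]_k)
  (C : 'M[R]_n) (V : 'M[R]_(k, n)) (i : 'I_n) : 'cV[R]_k :=
  rule (col i (state rule C V i)) (gvec C (state rule C V i) i).

Lemma col_step {R : realType} k n (rule : 'cV[R]_k -> 'cV[R]_k -> 'cV[R]_k)
  (C : 'M[R]_n) (W : 'M[R]_(k, n)) i j :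
  col j (step rule C W i) =
  if j == i then (enorm (rule (col i W) (gvec C W i)))^-1 *: rule (col i W) (gvec C W i)
  else col j W.
Proof. by apply/colP => a; rewrite !mxE; case: eqP => _; rewrite !mxE. Qed.

Lemma stN_succ {R : realType} k n (rule : 'cV[R]_k -> 'cV[R]_k -> 'cV[R]_k)
  (C : 'M[R]_n) (V : 'M[R]_(k, n)) (i : 'I_n) :
  stN rule C V i.+1 = step rule C (state rule C V i) i.
Proof.
rewrite /stN /state (take_nth i); last by rewrite size_enum_ord.
by rewrite foldl_rcons nth_ord_enum.
Qed.

Lemma col_stN {R : realType} k n (rule : 'cV[R]_k -> 'cV[R]_k -> 'cV[R]_k)
  (C : 'M[R]_n) (V : 'M[R]_(k, n)) (m : nat) : (m <= n)%N -> forall j : 'I_n,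
  col j (stN rule C V m) = if (j < m)%N then col j (stN rule C V j.+1) else col j V.
Proof.
elim: m => [|m IH] mn j; first by rewrite /stN take0.
have mn' : (m < n)%N by [].
have := stN_succ rule C V (Ordinal mn'); rewrite /= => ->.
rewrite col_step; case: eqP => [->|/eqP jm].
  rewrite (_ : (Ordinal mn' < m.+1)%N = true); last exact: ltnSn.
  by rewrite (stN_succ rule C V (Ordinal mn')) col_step eqxx.
have -> : state rule C V (Ordinal mn') = stN rule C V m by [].
rewrite IH; last exact: ltnW.
have -> : (j < m.+1)%N = (j < m)%N.
  rewrite ltnS leq_eqVlt; case: eqP => //= h; exfalso; move/eqP: jm; apply.
  exact: val_inj.
by [].
Qed.

Lemma col_state_self {R : realType} k n (rule : 'cV[R]_k -> 'cV[R]_k -> 'cV[R]_k)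
  (C : 'M[R]_n) (V : 'M[R]_(k, n)) (i : 'I_n) :
  col i (state rule C V i) = col i V.
Proof. by rewrite /state -/(stN rule C V i) col_stN ?ltnn // ltnW. Qed.

Lemma col_state {R : realType} k n (rule : 'cV[R]_k -> 'cV[R]_k -> 'cV[R]_k)
  (C : 'M[R]_n) (V : 'M[R]_(k, n)) (i j : 'I_n) :
  col j (state rule C V i) =
  if (j < i)%N then (enorm (ucol rule C V j))^-1 *: ucol rule C V j else col j V.
Proof.
have -> : state rule C V i = stN rule C V i by [].
rewrite col_stN; last exact: ltnW (ltn_ord i).
by case: ifP => // _; rewrite stN_succ col_step eqxx.
Qed.

Lemma gvecE {R : realType} k n (C : 'M[R]_n) (W : 'M[R]_(k, n)) i :
  C i i = 0 -> gvec C W i = \sum_j C i j *: col j W.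
Proof.
by move=> c0; rewrite /gvec [in RHS](bigD1 i) //= c0 scale0r add0r.
Qed.

Lemma rcolE {R : realType} k n (C : 'M[R]_n) (Vs V : 'M[R]_(k, n)) i :
  C^T = C ->
  col i (V *m Smat C Vs) = \sum_j C i j *: col j V + lam C Vs i *: col i V.
Proof.
move=> sC; apply/colP => b; rewrite !mxE summxE.
under eq_bigr => j _ do rewrite !mxE mulrDr.
rewrite big_split /=; congr (_ + _).
  by apply: eq_bigr => j _; rewrite !mxE (Csym j i sC) mulrC.
rewrite (bigD1 i) //= eqxx mul1r big1; first by rewrite addr0 mulrC.
by move=> j /negbTE ->; rewrite mul0r mulr0.
Qed.

Lemma enorm_col_sq {R : realType} k n (M : 'M[R]_(k, n)) i :
  enorm (col i M) ^+ 2 = \sum_a M a i ^+ 2.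
Proof.
rewrite /enorm sqr_sqrtr; last by apply: sumr_ge0 => a _; apply: sqr_ge0.
by apply: eq_bigr => a _; rewrite mxE.
Qed.

Lemma sum_le_total {R : realType} n (F : 'I_n -> R) i :
  (forall j, 0 <= F j) -> F i <= \sum_j F j.
Proof. by move=> h; rewrite (bigD1 i) //= lerDl; apply: sumr_ge0. Qed.


Lemma pass_bound {R : realType} k n (C : 'M[R]_n) (Vs V : 'M[R]_(k, n))
  (rule : 'cV[R]_k -> 'cV[R]_k -> 'cV[R]_k) (a : 'I_n -> R) (kap m0 E : R) :
  C^T = C -> (forall i, C i i = 0) -> unit_cols V ->
  0 < kap -> 0 < m0 -> (forall i, 0 <= a i) ->
  (forall i v g, rule v g = a i *: v - kap *: (g + lam C Vs i *: v)) ->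
  (forall i, m0 <= ynorm rule C V i) ->
  (forall i, enorm (col i (V *m Smat C Vs)) <= E) ->
  forall i, `|ynorm rule C V i - a i| <=
     kap * ((1 + 2 * kap / m0 * \sum_i \sum_j `|C i j|) ^+ i * E).
Proof.
move=> sC c0 uc kp m0p a0 Hrule Hlow HE.
set X := 2 * kap / m0 * _.
set q := fun i => gvec C (state rule C V i) i + lam C Vs i *: col i V.
have uE i : ucol rule C V i = a i *: col i V - kap *: q i.
  by rewrite /ucol (Hrule i) col_state_self.
have yE i : ynorm rule C V i = enorm (ucol rule C V i) by [].
have b1 i : `|ynorm rule C V i - a i| <= kap * enorm (q i).
  have := enormB_rev (ucol rule C V i) (a i *: col i V).
  rewrite enormZ (ger0_norm (a0 i)) (uc i) mulr1 -yE uE.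
  by rewrite addrAC subrr add0r enormN enormZ (gtr0_norm kp).
have b2 i : enorm ((enorm (ucol rule C V i))^-1 *: ucol rule C V i - col i V)
             <= 2 * kap / m0 * enorm (q i).
  have up : 0 < enorm (ucol rule C V i) by apply: lt_le_trans (Hlow i).
  apply: le_trans (normalize_bound (uc i) (a0 i) up) _.
  have -> : ucol rule C V i - a i *: col i V = - (kap *: q i).
    by rewrite uE addrAC subrr add0r.
  rewrite enormN enormZ (gtr0_norm kp).
  have Ui : (enorm (ucol rule C V i))^-1 <= m0^-1.
    by rewrite lef_pV2 ?posrE // -yE.
  have h0 : 0 <= 2 * kap * enorm (q i).
    by apply: mulr_ge0; [apply: mulr_ge0; lra | apply: enorm_ge0].
  have := ler_wpM2l h0 Ui.
  move: (enorm (q i)) ((enorm (ucol rule C V i))^-1) (m0^-1) => Q U M h.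
  have -> : 2 * (kap * Q) * U = 2 * kap * Q * U by ring.
  have -> : 2 * kap * M * Q = 2 * kap * Q * M by ring.
  exact: h.
have qE i : q i = col i (V *m Smat C Vs) +
    \sum_j C i j *: (col j (state rule C V i) - col j V).
  rewrite /q gvecE // rcolE //.
  have -> : \sum_j C i j *: col j (state rule C V i) = \sum_j C i j *: col j V +
     \sum_j C i j *: (col j (state rule C V i) - col j V).
    rewrite -big_split; apply: eq_bigr => j _ /=.
    by rewrite -scalerDr addrC subrK.
  by rewrite addrAC.
have qb i : enorm (q i) <= E +
    \sum_j `|C i j| * enorm (col j (state rule C V i) - col j V).
  rewrite qE; apply: le_trans (enormD _ _) _; apply: lerD (HE i) _.
  apply: le_trans (enorm_sum _ _) _; apply: ler_sum => j _; by rewrite enormZ.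
have dE i j : col j (state rule C V i) - col j V =
    if (j < i)%N then (enorm (ucol rule C V j))^-1 *: ucol rule C V j - col j V
    else 0.
  by rewrite col_state; case: ifP => _ //; rewrite subrr.
have X0 : 0 <= X.
  apply: mulr_ge0; first by apply: divr_ge0; lra.
  by apply: sumr_ge0 => i _; apply: sumr_ge0.
have main : forall m (i : 'I_n), nat_of_ord i = m ->
    enorm (q i) <= (1 + X) ^+ m * E.
  elim/ltn_ind => m IH i im.
  have E0 : 0 <= E by apply: le_trans (HE i); apply: enorm_ge0.
  apply: le_trans (qb i) _.
  case: m IH im => [|p] IH im.
    rewrite big1 ?addr0 ?expr0 ?mul1r // => j _.
    by rewrite dE im ltn0 enorm0 mulr0.
  set P := (1 + X) ^+ p.
  have P1 : 1 <= P by apply: exprn_ege1; lra.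
  have hj : forall j, `|C i j| * enorm (col j (state rule C V i) - col j V) <=
       `|C i j| * (2 * kap / m0 * (P * E)).
    move=> j; apply: ler_wpM2l => //; rewrite dE.
    case: ifP => ji; last first.
      rewrite enorm0; apply: mulr_ge0; first by apply: divr_ge0; lra.
      by apply: mulr_ge0 => //; lra.
    apply: le_trans (b2 j) _; apply: ler_wpM2l; first by apply: divr_ge0; lra.
    have jp : (j < p.+1)%N by rewrite -im.
    apply: le_trans (IH j jp j erefl) _; apply: ler_wpM2r => //.
    by apply: ler_weXn2l; [lra | rewrite -ltnS].
  apply: le_trans (lerD (lexx E) (ler_sum _ (fun j _ => hj j))) _.
  rewrite -mulr_suml.
  have Ci : \sum_j `|C i j| <= \sum_i \sum_j `|C i j|.
    by apply: sum_le_total => l; apply: sumr_ge0.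
  have : (\sum_j `|C i j|) * (2 * kap / m0 * (P * E)) <= X * (P * E).
    have cz : 0 <= 2 * kap / m0 * (P * E).
      apply: mulr_ge0; first by apply: divr_ge0; lra.
      by apply: mulr_ge0 => //; lra.
    apply: le_trans (ler_wpM2r cz Ci) _; rewrite /X le_eqVlt; apply/orP; left.
    apply/eqP; ring.
  have PE : E <= P * E by apply: ler_peMl.
  rewrite exprS -/P; nra.
move=> i; apply: le_trans (b1 i) _; apply: ler_wpM2l; first lra.
exact: main.
Qed.

Definition E2 {R : realType} k n (C : 'M[R]_n) (Vs V : 'M[R]_(k, n)) : R :=
  \sum_i \sum_a (V *m Smat C Vs) a i ^+ 2.

Lemma col_le_E2 {R : realType} k n (C : 'M[R]_n) (Vs V : 'M[R]_(k, n)) i :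
  enorm (col i (V *m Smat C Vs)) <= Num.sqrt (E2 C Vs V).
Proof.
rewrite /enorm; apply: ler_wsqrtr.
under eq_bigr => a _ do rewrite mxE.
rewrite /E2; apply: (@sum_le_total _ _ (fun i => \sum_a (V *m Smat C Vs) a i ^+ 2) i) => j.
by apply: sumr_ge0 => a _; apply: sqr_ge0.
Qed.

Lemma final_gen {R : realType} k n (C : 'M[R]_n) (Vs : 'M[R]_(k, n))
  (rule : 'cV[R]_k -> 'cV[R]_k -> 'cV[R]_k) (a : 'I_n -> R) (kap m0 : R) :
  C^T = C -> (forall i, C i i = 0) -> sdp_opt C Vs ->
  0 < kap -> 0 < m0 -> (forall i, 0 <= a i) ->
  (forall i v g, rule v g = a i *: v - kap *: (g + lam C Vs i *: v)) ->
  (forall i, m0 <= ynorm rule C Vs i) ->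
  exists tau : R, 0 < tau /\ forall V : 'M[R]_(k, n), unit_cols V ->
    (forall i, m0 <= ynorm rule C V i) ->
    sqdist (ynorm rule C V) (ynorm rule C Vs) <= tau * (fobj C V - fobj C Vs).
Proof.
move=> sC c0 opt kp m0p a0 Hrule HlowVs.
set X := 2 * kap / m0 * \sum_i \sum_j `|C i j|.
have X0 : 0 <= X.
  apply: mulr_ge0; first by apply: divr_ge0; lra.
  by apply: sumr_ge0 => i _; apply: sumr_ge0.
set B := kap * (1 + X) ^+ n.
have L0 : 0 <= Lc C Vs by apply: sumr_ge0 => i _; apply: sumr_ge0.
have B2 : 0 <= B ^+ 2 by apply: sqr_ge0.
have T0 : 0 <= n%:R * B ^+ 2 * Lc C Vs.
  by apply: mulr_ge0 => //; apply: mulr_ge0.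
exists (n%:R * B ^+ 2 * Lc C Vs + 1); split; first lra.
have hVs i : ynorm rule C Vs i = a i.
  have [E2b _] := E2_bound sC opt (proj1 opt).
  rewrite subrr mulr0 in E2b.
  have := pass_bound sC c0 (proj1 opt) kp m0p a0 Hrule HlowVs (@col_le_E2 _ _ _ C Vs Vs) i.
  rewrite -/(E2 C Vs Vs) ler0_sqrtr // !mulr0 normr_le0 subr_eq0.
  by move/eqP.
move=> V uc HlowV.
have [E2b gap0] := E2_bound sC opt uc.
rewrite -/(E2 C Vs V) in E2b.
have E20 : 0 <= E2 C Vs V.
  by apply: sumr_ge0 => i _; apply: sumr_ge0 => b _; apply: sqr_ge0.
have pb i : (ynorm rule C V i - ynorm rule C Vs i) ^+ 2 <= B ^+ 2 * E2 C Vs V.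
  have := pass_bound sC c0 uc kp m0p a0 Hrule HlowV (@col_le_E2 _ _ _ C Vs V) i.
  rewrite -/X hVs => h.
  have h2 : `|ynorm rule C V i - a i| <= B * Num.sqrt (E2 C Vs V).
    apply: le_trans h _; rewrite /B -mulrA; apply: ler_wpM2l; first lra.
    apply: ler_wpM2r; first exact: sqrtr_ge0.
    by apply: ler_weXn2l; [lra | exact: ltnW (ltn_ord i)].
  rewrite -(sqr_sqrtr E20) -exprMn -real_normK ?num_real //.
  apply: lerXn2r => //; rewrite ?nnegrE //.
  by apply: mulr_ge0; [rewrite /B; apply: mulr_ge0; [lra|apply: exprn_ge0; lra] | apply: sqrtr_ge0].
rewrite /sqdist; apply: le_trans (ler_sum _ (fun i _ => pb i)) _.
rewrite sumr_const card_ord -[(B ^+ 2 * E2 C Vs V) *+ n]mulr_natl.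
move: T0; move: (fobj C V - fobj C Vs) gap0 E2b => g g0 hE.
move: (B ^+ 2) B2 (E2 C Vs V) (Lc C Vs) L0 (n%:R) (ler0n R n) hE => b b0 e l l0 N N0 hE T0.
have h1 := ler_wpM2l (mulr_ge0 N0 b0) hE.
have h2 : 0 <= N * b * l * g by apply: mulr_ge0.
have -> : N * (b * e) = (N * b) * e by ring.
apply: (le_trans h1).
have -> : (N * b * l + 1) * g = N * b * (l * g) + g by ring.
lra.
Qed.

Lemma lam_ge0 {R : realType} k n (C : 'M[R]_n) (Vs : 'M[R]_(k, n)) i :
  C^T = C -> (forall i, C i i = 0) -> sdp_opt C Vs -> 0 <= lam C Vs i.
Proof.
move=> sC c0 opt; have := S_psd sC opt (\col_j (i == j)%:R).
rewrite qfE.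
have -> : \sum_i0 \sum_j (\col_j (i == j)%:R) i0 0 * Smat C Vs i0 j *
            (\col_j (i == j)%:R) j 0 = Smat C Vs i i.
  under eq_bigr => i' _ do under eq_bigr => j _ do
    rewrite !mxE (mulrC _ ((i == j)%:R)).
  under eq_bigr => i' _ do rewrite sum_delta_l.
  by rewrite sum_delta_l mxE.
by rewrite mxE c0 eqxx mul1r add0r.
Qed.

Lemma rowsum_le_max {R : realType} n (C : 'M[R]_n) i :
  C^T = C -> \sum_j `|C i j| <= maxcol1 C.
Proof.
move=> sC; have -> : \sum_j `|C i j| = \sum_j `|C j i|.
  by apply: eq_bigr => j _; rewrite (Csym i j sC).
exact: (le_bigmax 0 (fun i => \sum_j `|C j i|) i).
Qed.

Lemma low_theta {R : realType} k n (C : 'M[R]_n) (V : 'M[R]_(k, n)) (theta : R) :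
  C^T = C -> (forall i, C i i = 0) -> 0 < theta -> theta * maxcol1 C < 1 ->
  unit_cols V -> forall i, 1 - theta * maxcol1 C <= ynorm (@rule_Mtheta R theta k) C V i.
Proof.
move=> sC c0 tp tm uc.
set rule := @rule_Mtheta R theta k.
suff : forall m (i : 'I_n), nat_of_ord i = m -> 1 - theta * maxcol1 C <= ynorm rule C V i.
  by move=> h i; apply: (h i).
elim/ltn_ind => m IH i im.
have cb : forall j, enorm (col j (state rule C V i)) <= 1.
  move=> j; rewrite col_state; case: ifP => ji; last by rewrite (uc j).
  have jm : (j < m)%N by rewrite -im.
  have hj := IH j jm j erefl.
  have up : 0 < enorm (ucol rule C V j) by apply: lt_le_trans hj; lra.
  rewrite enormZ ger0_norm; last by rewrite invr_ge0 ltW.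
  by rewrite mulVf // lt0r_neq0.
have gb : enorm (gvec C (state rule C V i) i) <= maxcol1 C.
  rewrite gvecE //; apply: le_trans (enorm_sum _ _) _.
  apply: le_trans (rowsum_le_max i sC); apply: ler_sum => j _.
  rewrite enormZ; apply: ler_piMr => //; exact: cb.
have : 1 - theta * enorm (gvec C (state rule C V i) i) <= ynorm rule C V i.
  rewrite /ynorm /rule /rule_Mtheta col_state_self.
  have := enormB_rev (col i V) (theta *: gvec C (state rule C V i) i).
  rewrite (uc i) enormZ (gtr0_norm tp) => h.
  by apply: le_trans h; apply: ler_norm.
have := ler_wpM2l (ltW tp) gb; lra.
Qed.
Unset Implicit Arguments.

Theorem lemma19 (R : realType) (k n : nat) (C : 'M[R]_n) (Vs : 'M[R]_(k, n)) :
  C^T = C -> (forall i, C i i = 0) -> sdp_opt C Vs ->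
  (* Mixing method M under non-degeneracy *)
  (forall delta : R, 0 < delta -> nondeg C Vs delta ->
     exists tau : R, 0 < tau /\
       forall V : 'M[R]_(k, n), unit_cols V -> nondeg C V delta ->
         sqdist (ynorm (@rule_M R k) C V) (ynorm (@rule_M R k) C Vs)
           <= tau * (fobj C V - fobj C Vs)) /\
  (* step-size version M_theta, theta in (0, 1 / max_i ||c_i||_1) *)
  (forall theta : R, 0 < theta -> theta * maxcol1 C < 1 ->
     exists tau : R, 0 < tau /\
       forall V : 'M[R]_(k, n), unit_cols V ->
         sqdist (ynorm (@rule_Mtheta R theta k) C V) (ynorm (@rule_Mtheta R theta k) C Vs)
           <= tau * (fobj C V - fobj C Vs)).
Proof.
move=> sC c0 opt; split.
  move=> delta dp ndVs.
  have Hrule : forall i (v g : 'cV[R]_k),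
      rule_M v g = lam C Vs i *: v - 1 *: (g + lam C Vs i *: v).
    by move=> i v g; apply/colP => b; rewrite !mxE; ring.
  have low : forall V : 'M[R]_(k, n), nondeg C V delta ->
      forall i, delta <= ynorm (@rule_M R k) C V i.
    by move=> V nd i; rewrite /ynorm /rule_M enormN; apply: nd.
  have [tau [tp H]] := final_gen sC c0 opt ltr01 dp
    (fun i => lam_ge0 i sC c0 opt) Hrule (low Vs ndVs).
  exists tau; split => // V uc nd; exact: H uc (low V nd).
move=> theta tp tm.
have Hrule : forall i (v g : 'cV[R]_k),
    rule_Mtheta theta v g = (1 + theta * lam C Vs i) *: v - theta *: (g + lam C Vs i *: v).
  by move=> i v g; apply/colP => b; rewrite !mxE; ring.
have a0 : forall i, 0 <= 1 + theta * lam C Vs i.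
  move=> i; have := lam_ge0 i sC c0 opt => h.
  have := mulr_ge0 (ltW tp) h; lra.
have m0p : 0 < 1 - theta * maxcol1 C by lra.
have [tau [tp' H]] := final_gen sC c0 opt tp m0p a0 Hrule
  (low_theta sC c0 tp tm (proj1 opt)).
exists tau; split => // V uc; exact: H uc (low_theta sC c0 tp tm uc).
Qed.
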